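(* If $(\Omega,\mathcal F,\mathcal P)$ is pre-Hahn-localizable with a localization whose supports are pairwise disjoint, then $(\Omega,\mathcal F,\mathcal P)$ has the Hahn property.
   Context: $\mathcal P$ is a family of probability measures on $\mathcal F$. $\mathcal A\lll\mathcal B$ means every $A\in\mathcal A$ is absolutely continuous w.r.t. some $B\in\mathcal B$; $\mathrm{sconv}$ denotes countable convex combinations. $\mathcal P$ is pre-Hahn-localizable with localization $\mathcal Q$ (probability measures on $\mathcal F$) and supports $S_Q\in\mathcal F$ if $Q(S_R)=\delta_{QR}$ for $Q,R\in\mathcal Q$ and $\mathcal Q\lll\mathcal P\lll\mathrm{sconv}(\mathcal Q)$. For a family $\mathcal R$, $\mathcal F^{\mathcal R}=\bigcap_{R\in\mathcal R}\{F\cup Z:F\in\mathcal F,Z\subseteq N\in\mathcal F,R(N)=0\}$. $\mathcal P$ has the Hahn property if there is a family $\mathcal R$ of probability measures on $\mathcal F^{\mathcal P}$ such that (1) $\mathcal P$ and $\{R|_{\mathcal F}:R\in\mathcal R\}$ have the same polar (null-contained) sets and the $\mathcal F^{\mathcal P}$-measurable and $\mathcal F^{\mathcal R}$-measurable real functions coincide; (2) for every $R\in\mathcal R$ there is $W_R\in\mathcal F^{\mathcal P}$ with $R(W_R)=1$, the sets $W_R$ being pairwise disjoint; (3) for all $F\in\mathcal F$ and $P\in\mathcal P$, if $P(F\cap W_R)=0$ for all $R\in\mathcal R$ then $P(F)=0$. *)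

(* Defs.v *)
From mathcomp Require Import all_boot all_order all_algebra.
From mathcomp Require Import all_classical all_reals all_analysis.
Set Implicit Arguments. Unset Strict Implicit. Unset Printing Implicit Defensive.
Import Order.TTheory GRing.Theory Num.Theory.
Import numFieldNormedType.Exports.
Local Open Scope classical_set_scope.
Local Open Scope ring_scope.

(* A "measure" is represented by a function [set T -> R]; a probability
   measure on a sigma-algebra G is such a function that is a countably
   additive probability on G and (canonical representation) vanishes off G,
   so that two probability measures on G are equal iff they agree on G. *)
Section Defs.
Variables (T : Type) (R : realType).

Definition is_prob (G : set (set T)) (mu : set T -> R) : Prop :=
  [/\ (forall A, ~ G A -> mu A = 0),
      (forall A, G A -> 0 <= mu A),
      mu setT = 1 &
      (forall A : nat -> set T, (forall n, G (A n)) -> trivIset setT A ->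
         (fun n => \sum_(0 <= i < n) mu (A i)) @ \oo --> mu (\bigcup_n A n))].

Definition abs_cont (G : set (set T)) (mu nu : set T -> R) : Prop :=
  forall A, G A -> nu A = 0 -> mu A = 0.

Definition lll (G : set (set T)) (A B : set (set T -> R)) : Prop :=
  forall a, A a -> exists2 b, B b & abs_cont G a b.

Definition sconv (G : set (set T)) (Q : set (set T -> R)) : set (set T -> R) :=
  [set mu | (forall A, ~ G A -> mu A = 0) /\
    exists (c : nat -> R) (q : nat -> (set T -> R)),
      [/\ (forall n, 0 <= c n), (forall n, Q (q n)),
          (fun n => \sum_(0 <= i < n) c i) @ \oo --> (1 : R) &
          (forall A, G A ->
             (fun n => \sum_(0 <= i < n) c i * q i A) @ \oo --> mu A)]].

Definition pre_hahn_localization (G : set (set T)) (P Q : set (set T -> R))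
    (S : (set T -> R) -> set T) : Prop :=
  [/\ (forall q, Q q -> is_prob G q),
      (forall q, Q q -> G (S q)),
      (forall q r, Q q -> Q r -> q (S r) = if `[< q = r >] then 1 else 0),
      lll G Q P &
      lll G P (sconv G Q)].

Definition completion (G : set (set T)) (mu : set T -> R) : set (set T) :=
  [set A | exists B N Z, [/\ G B, G N, mu N = 0, Z `<=` N & A = B `|` Z]].

Definition completion_fam (G : set (set T)) (Rf : set (set T -> R))
  : set (set T) :=
  [set A | forall mu, Rf mu -> completion G mu A].

Definition completed_value (G : set (set T)) (mu : set T -> R) (A : set T)
    (v : R) : Prop :=
  exists B N Z, [/\ G B, G N, mu N = 0, Z `<=` N & A = B `|` Z] /\ mu B = v.

Definition polar (G : set (set T)) (Pf : set (set T -> R)) : set (set T) :=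
  [set A | exists N, [/\ G N, A `<=` N & forall mu, Pf mu -> mu N = 0]].

Definition restr (G : set (set T)) (mu : set T -> R) : set T -> R :=
  fun A => if `[< G A >] then mu A else 0.

Definition meas_fun (G : set (set T)) (f : T -> R) : Prop :=
  forall B : set R, measurable B -> G (f @^-1` B).

Definition hahn_property (G : set (set T)) (Pf : set (set T -> R)) : Prop :=
  let GP := completion_fam G Pf in
  exists (Rf : set (set T -> R)) (W : (set T -> R) -> set T),
    [/\ (forall r, Rf r -> is_prob GP r),
        polar G Pf = polar G (restr G @` Rf) /\
        (forall f : T -> R, meas_fun GP f <-> meas_fun (completion_fam G Rf) f),
        (forall r, Rf r -> GP (W r) /\ r (W r) = 1) /\
        (forall r r', Rf r -> Rf r' -> r <> r' -> W r `&` W r' = set0) &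
        (forall A mu, G A -> Pf mu ->
           (forall r, Rf r -> completed_value G mu (A `&` W r) 0) ->
           mu A = 0)].
End Defs.

(* Main.v *)
Require Import Defs.
From Stdlib Require Import ClassicalEpsilon.
From mathcomp Require Import all_boot all_order all_algebra.
From mathcomp Require Import all_classical all_reals all_analysis.
Set Implicit Arguments. Unset Strict Implicit. Unset Printing Implicit Defensive.
Import Order.TTheory GRing.Theory Num.Theory.
Import numFieldNormedType.Exports.
Local Open Scope classical_set_scope.
Local Open Scope ring_scope.

Lemma sa0 T (F : set (set T)) : sigma_algebra setT F -> F set0.
Proof. by case. Qed.

Lemma saC T (F : set (set T)) A : sigma_algebra setT F -> F A -> F (~` A).
Proof. by case=> _ h _ /h; rewrite setTD. Qed.

Lemma saT T (F : set (set T)) : sigma_algebra setT F -> F setT.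
Proof. by move=> h; rewrite -setC0; apply: saC => //; apply: sa0. Qed.

Lemma saUn T (F : set (set T)) (A : nat -> set T) : sigma_algebra setT F ->
  (forall n, F (A n)) -> F (\bigcup_n A n).
Proof. by case=> _ _; apply. Qed.

Lemma saU T (F : set (set T)) A B : sigma_algebra setT F -> F A -> F B -> F (A `|` B).
Proof.
move=> h hA hB.
have -> : A `|` B = \bigcup_n (if n == 0%N then A else B).
  apply/seteqP; split=> x.
    by case=> hx; [exists 0%N | exists 1%N].
  by case=> -[|n] _ /=; [left|right].
by apply: saUn => // -[|n].
Qed.

Lemma saI T (F : set (set T)) A B : sigma_algebra setT F -> F A -> F B -> F (A `&` B).
Proof.
move=> h hA hB; rewrite -(setCK (A `&` B)) setCI.
by apply: saC => //; apply: saU => //; apply: saC.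
Qed.

Lemma saD T (F : set (set T)) A B : sigma_algebra setT F -> F A -> F B -> F (A `\` B).
Proof. by move=> h hA hB; rewrite setDE; apply: saI => //; apply: saC. Qed.

Lemma saIn T (F : set (set T)) (A : nat -> set T) : sigma_algebra setT F ->
  (forall n, F (A n)) -> F (\bigcap_n A n).
Proof.
move=> h hA; rewrite -(setCK (\bigcap_n A n)) setC_bigcap.
by apply: saC => //; apply: saUn => // n; apply: saC.
Qed.

Lemma sabig T (F : set (set T)) (A : nat -> set T) n : sigma_algebra setT F ->
  (forall n, F (A n)) -> F (\big[setU/set0]_(k < n) A k).
Proof.
move=> h hA; elim: n => [|n ih]; first by rewrite big_ord0; apply: sa0.
by rewrite big_ord_recr /=; apply: saU.
Qed.

Lemma uniq_lim (R : realType) (u : nat -> R) (a b : R) :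
  u @ \oo --> a -> u @ \oo --> b -> a = b.
Proof. by move=> ha hb; exact: (cvg_unique _ ha hb). Qed.

Lemma pr0 T (R : realType) (F : set (set T)) (m : set T -> R) :
  sigma_algebra setT F -> is_prob F m -> m set0 = 0.
Proof.
move=> hF [_ _ _ hc].
have := hc (fun=> set0) (fun=> sa0 hF).
have -> : \bigcup_(n : nat) (set0 : set T) = set0 by rewrite bigcup0.
move=> /(_ _) h.
have tr : trivIset setT (fun _ : nat => (set0 : set T)) by move=> i j _ _ [x [hx _]]; case: hx.
have {}h := h tr.
have : cvgn (series (fun _ : nat => m set0)).
  by apply/cvg_ex; exists (m set0).
move=> /cvg_series_cvg_0 h0.
exact: (uniq_lim (cvg_cst (m set0)) h0).
Qed.

Lemma cvg_series_fin (R : realType) (u : nat -> R) k :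
  (forall n, (k <= n)%N -> u n = 0) ->
  (fun n => \sum_(0 <= i < n) u i) @ \oo --> \sum_(0 <= i < k) u i.
Proof.
move=> hu; apply: cvg_near_cst; exists k => // n /= hn.
rewrite (@big_cat_nat _ _ _ k 0 n _ _ (leq0n k) hn) /= [X in _ + X](_ : _ = 0) ?addr0 //.
by rewrite big_nat_cond big1 // => i /andP[/andP[hi _] _]; apply: hu.
Qed.

Lemma prU T (R : realType) (F : set (set T)) (m : set T -> R) A B :
  sigma_algebra setT F -> is_prob F m -> F A -> F B -> A `&` B = set0 ->
  m (A `|` B) = m A + m B.
Proof.
move=> hF hm hA hB hAB.
have m0 := pr0 hF hm.
case: hm => _ _ _ hc.
pose S := fun k : nat => if k == 0%N then A else if k == 1%N then B else set0.
have hS : forall n, F (S n).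
  by move=> [|[|n]] //=; apply: sa0.
have tr : trivIset setT S.
  move=> [|[|i]] [|[|j]] _ _ //= [x []] //; rewrite -?hAB;
  by move=> h1 h2; exfalso; move: hAB; rewrite -?subset0 => /(_ x) /=; apply; split.
have eU : \bigcup_n S n = A `|` B.
  apply/seteqP; split=> x.
    by case=> -[|[|n]] _ /=; [left|right|].
  by case=> hx; [exists 0%N | exists 1%N].
have := hc S hS tr; rewrite eU => h.
apply: (uniq_lim h).
have -> : m A + m B = \sum_(0 <= i < 2) m (S i).
  by rewrite big_nat_recr //= big_nat_recr //= big_geq // add0r.
by apply: cvg_series_fin => -[|[|n]].
Qed.

Lemma prle T (R : realType) (F : set (set T)) (m : set T -> R) A B :
  sigma_algebra setT F -> is_prob F m -> F A -> F B -> A `<=` B -> m A <= m B.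
Proof.
move=> hF hm hA hB hAB.
have -> : B = A `|` (B `\` A) by rewrite setDUK.
rewrite (prU hF hm) //; first by rewrite lerDl; case: hm => _ h _ _; apply: h; apply: saD.
  by apply: saD.
by rewrite setDE setICA setICr setI0.
Qed.

Lemma prUle T (R : realType) (F : set (set T)) (m : set T -> R) A B :
  sigma_algebra setT F -> is_prob F m -> F A -> F B -> m (A `|` B) <= m A + m B.
Proof.
move=> hF hm hA hB.
have -> : A `|` B = A `|` (B `\` A) by rewrite setUDr setDv setD0.
rewrite (prU hF hm) //; first by rewrite lerD2l; apply: (prle hF hm) => //; apply: saD.
  by apply: saD.
by rewrite setDE setICA setICr setI0.
Qed.

Lemma prge0 T (R : realType) (F : set (set T)) (m : set T -> R) A :
  is_prob F m -> F A -> 0 <= m A.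
Proof. by case=> _ h _ _; apply: h. Qed.

Lemma prnull_sub T (R : realType) (F : set (set T)) (m : set T -> R) A N :
  sigma_algebra setT F -> is_prob F m -> F A -> F N -> A `<=` N -> m N = 0 -> m A = 0.
Proof.
move=> hF hm hA hN hAN hN0; apply/eqP; rewrite eq_le (prge0 hm hA) andbT -hN0.
exact: (prle hF hm).
Qed.

Lemma prnull_bigcup T (R : realType) (F : set (set T)) (m : set T -> R)
  (N : nat -> set T) :
  sigma_algebra setT F -> is_prob F m -> (forall n, F (N n)) ->
  (forall n, m (N n) = 0) -> m (\bigcup_n N n) = 0.
Proof.
move=> hF hm hN hN0.
have hD : forall n, F (seqDU N n).
  by move=> n; rewrite /seqDU; apply: (saD hF (hN n)); exact: (sabig n hF hN).
have hD0 : forall n, m (seqDU N n) = 0.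
  move=> n; apply: (prnull_sub hF hm (hD n) (hN n) _ (hN0 n)).
  by move=> x [].
have := (match hm with And4 _ _ _ hc => hc end) _ hD (@trivIset_seqDU _ N).
rewrite -seqDU_bigcup_eq => h.
apply: (uniq_lim h).
have := @cvg_series_fin R (fun i => m (seqDU N i)) 0 (fun n _ => hD0 n).
by rewrite big_geq.
Qed.

Lemma prC T (R : realType) (F : set (set T)) (m : set T -> R) A :
  sigma_algebra setT F -> is_prob F m -> F A -> m (~` A) = 1 - m A.
Proof.
move=> hF hm hA.
have := prU hF hm hA (saC hF hA) (setICr A).
rewrite setUv; case: hm => _ _ -> _ => ->.
by rewrite addrAC subrr add0r.
Qed.

Definition crep T (R : realType) (F : set (set T)) (m : set T -> R) A B N :=
  [/\ F B, F N, m N = 0, B `<=` A & A `<=` B `|` N].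

Lemma completion_crep T (R : realType) (F : set (set T)) (m : set T -> R) A :
  completion F m A <-> exists B N, crep F m A B N.
Proof.
split.
  move=> [B [N [Z [hB hN hN0 hZ ->]]]]; exists B, N; split => //.
  by move=> x [hx|/hZ hx]; [left|right].
move=> [B [N [hB hN hN0 hBA hAB]]]; exists B, N, (A `\` B); split => //.
  by move=> x [/hAB [|//]].
by rewrite setDUK.
Qed.

Lemma crep_eq T (R : realType) (F : set (set T)) (m : set T -> R) A B1 N1 B2 N2 :
  sigma_algebra setT F -> is_prob F m ->
  crep F m A B1 N1 -> crep F m A B2 N2 -> m B1 = m B2.
Proof.
move=> hF hm.
suff h : forall B1 N1 B2 N2, crep F m A B1 N1 -> crep F m A B2 N2 -> m B1 <= m B2.
  by move=> h1 h2; apply/eqP; rewrite eq_le !(h _ _ _ _ h1 h2, h _ _ _ _ h2 h1).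
move=> C1 M1 C2 M2 [hC1 hM1 hM10 hC1A hAC1] [hC2 hM2 hM20 hC2A hAC2].
apply: (le_trans (prle hF hm hC1 (saU hF hC2 hM2) (subset_trans hC1A hAC2))).
by apply: (le_trans (prUle hF hm hC2 hM2)); rewrite hM20 addr0.
Qed.

Definition ext T (R : realType) (F GP : set (set T)) (m : set T -> R) A : R :=
  if `[< GP A >] then
    m (epsilon (inhabits set0) (fun B => exists N, crep F m A B N))
  else 0.

Lemma ext_val T (R : realType) (F GP : set (set T)) (m : set T -> R) A B N :
  sigma_algebra setT F -> is_prob F m -> GP A ->
  crep F m A B N -> ext F GP m A = m B.
Proof.
move=> hF hm hA hc; rewrite /ext asboolT //.
have [N' hN'] := epsilon_spec (inhabits set0) (fun B => exists N, crep F m A B N)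
  (ex_intro _ B (ex_intro _ N hc)).
exact: (crep_eq hF hm hN' hc).
Qed.

Lemma ext_F T (R : realType) (F GP : set (set T)) (m : set T -> R) A :
  sigma_algebra setT F -> is_prob F m -> GP A -> F A -> ext F GP m A = m A.
Proof.
move=> hF hm hA hFA; apply: (ext_val hF hm hA (N := set0)).
split; [by [] | exact: sa0 | exact: (pr0 hF hm) | by [] | by rewrite setU0].
Qed.

Lemma completion_bigcup T (R : realType) (F : set (set T)) (m : set T -> R)
  (A : nat -> set T) :
  sigma_algebra setT F -> is_prob F m ->
  (forall n, completion F m (A n)) -> completion F m (\bigcup_n A n).
Proof.
move=> hF hm hA.
have : forall n, exists BN : set T * set T, crep F m (A n) BN.1 BN.2.
  by move=> n; have /completion_crep [B [N h]] := hA n; exists (B, N).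
move=> /choice [f hf]; apply/completion_crep.
exists (\bigcup_n (f n).1), (\bigcup_n (f n).2); split.
- by apply: saUn => // n; case: (hf n).
- by apply: saUn => // n; case: (hf n).
- by apply: (prnull_bigcup hF hm) => n; case: (hf n).
- by move=> x [n _ hx]; exists n => //; case: (hf n) => _ _ _ /(_ x hx).
- move=> x [n _ hx]; case: (hf n) => _ _ _ _ /(_ x hx) [h|h].
    by left; exists n.
  by right; exists n.
Qed.

Lemma ext_prob T (R : realType) (F GP : set (set T)) (m : set T -> R) :
  sigma_algebra setT F -> is_prob F m ->
  (forall A, GP A -> completion F m A) ->
  (forall A : nat -> set T, (forall n, GP (A n)) -> GP (\bigcup_n A n)) ->
  GP setT -> is_prob GP (ext F GP m).
Proof.
move=> hF hm hGc hGU hGT; split.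
- by move=> A hA; rewrite /ext asboolF.
- move=> A hA; have /completion_crep [B [N hc]] := hGc A hA.
  rewrite (ext_val hF hm hA hc); apply: (prge0 hm); by case: hc.
- rewrite (ext_F hF hm hGT (saT hF)); by case: hm.
move=> A hA tr.
have : forall n, exists BN : set T * set T, crep F m (A n) BN.1 BN.2.
  by move=> n; have /completion_crep [B [N h]] := hGc _ (hA n); exists (B, N).
move=> /choice [f hf].
pose M := \bigcup_n (f n).2.
have hM : F M by apply: saUn => // n; case: (hf n).
have hM0 : m M = 0 by apply: (prnull_bigcup hF hm) => n; case: (hf n).
pose B' := fun n => (f n).1 `\` M.
have hB' : forall n, crep F m (A n) (B' n) M.
  move=> n; case: (hf n) => hB hN hN0 hBA hAB; split => //.
  - exact: saD.
  - by move=> x [/hBA].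
  move=> x /hAB [hx|hx].
    by have [hxM|hxM] := pselect (M x); [right|left].
  by right; exists n.
have hU : crep F m (\bigcup_n A n) (\bigcup_n B' n) M.
  split => //.
  - by apply: saUn => // n; case: (hB' n).
  - by move=> x [n _ hx]; exists n => //; case: (hB' n) => _ _ _ /(_ x hx).
  move=> x [n _ hx]; case: (hB' n) => _ _ _ _ /(_ x hx) [h|h].
    by left; exists n.
  by right.
rewrite (ext_val hF hm (hGU _ hA) hU).
have -> : (fun n => \sum_(0 <= i < n) ext F GP m (A i)) =
          (fun n => \sum_(0 <= i < n) m (B' i)).
  by apply: funext => n; apply: eq_bigr => i _; exact: (ext_val hF hm (hA i) (hB' i)).
case: hm => _ _ _ hc; apply: hc.
  by move=> n; case: (hB' n).
move=> i j _ _ [x [hi hj]]; apply: tr => //; exists x; split.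
  by case: (hB' i) => _ _ _ /(_ x hi).
by case: (hB' j) => _ _ _ /(_ x hj).
Qed.

Lemma compF T (R : realType) (F : set (set T)) (m : set T -> R) A :
  sigma_algebra setT F -> is_prob F m -> F A -> completion F m A.
Proof.
move=> hF hm hA; exists A, set0, set0; split => //; first exact: sa0.
  exact: (pr0 hF hm).
by rewrite setU0.
Qed.

Lemma sum_null (R : realType) (u : nat -> R) (l : R) :
  (forall i, u i = 0) -> (fun n => \sum_(0 <= i < n) u i) @ \oo --> l -> l = 0.
Proof.
move=> hu hl; have := @cvg_series_fin R u 0 (fun n _ => hu n).
by rewrite big_geq // => h; apply: (uniq_lim hl h).
Qed.

Lemma ext_inj T (R : realType) (F GP : set (set T)) (q1 q2 : set T -> R) :
  sigma_algebra setT F -> is_prob F q1 -> is_prob F q2 ->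
  (forall A, F A -> GP A) -> ext F GP q1 = ext F GP q2 -> q1 = q2.
Proof.
move=> hF h1 h2 hFG he; apply: funext => A.
have [hA|hA] := pselect (F A).
  by rewrite -(ext_F hF h1 (hFG _ hA) hA) -(ext_F hF h2 (hFG _ hA) hA) he.
by case: h1 => e1 _ _ _; case: h2 => e2 _ _ _; rewrite e1 // e2.
Qed.

Lemma cv_null T (R : realType) (F : set (set T)) (p : set T -> R) X :
  sigma_algebra setT F -> is_prob F p -> F X -> completed_value F p X 0 -> p X = 0.
Proof.
move=> hF hp hX [B [N [Z [[hB hN hN0 hZ hXe] hB0]]]].
apply/eqP; rewrite eq_le (prge0 hp hX) andbT.
have hs : X `<=` B `|` N by rewrite hXe => x [h|/hZ h]; [left|right].
apply: (le_trans (prle hF hp hX (saU hF hB hN) hs)).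
by apply: (le_trans (prUle hF hp hB hN)); rewrite hB0 hN0 addr0.
Qed.

Unset Implicit Arguments.

Theorem lemma3p13 (T : Type) (R : realType) (F : set (set T))
    (P : set (set T -> R)) :
  sigma_algebra setT F ->
  (forall p, P p -> is_prob F p) ->
  (exists (Q : set (set T -> R)) (S : (set T -> R) -> set T),
      pre_hahn_localization F P Q S /\
      (forall q r, Q q -> Q r -> q <> r -> S q `&` S r = set0)) ->
  hahn_property F P.
Proof.
move=> hF hP [Q [S [[hQp hQS hQS1 hQP hPQ] hdisj]]].
rewrite /hahn_property.
set GP := completion_fam F P.
have hFG : forall A, F A -> GP A by move=> A hA p /hP hp; apply: compF.
have hGT : GP setT by apply: hFG; apply: saT.
have hGU : forall A : nat -> set T, (forall n, GP (A n)) -> GP (\bigcup_n A n).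
  by move=> A hA p pP; apply: (completion_bigcup hF (hP _ pP)) => n; apply: hA.
have hGc : forall q, Q q -> forall A, GP A -> completion F q A.
  move=> q qQ A hA; have [p pP hqp] := hQP q qQ.
  have [B [N [Z [hB hN hN0 hZ ->]]]] := hA p pP.
  by exists B, N, Z; split => //; apply: hqp.
pose Rf := [set r | exists2 q, Q q & r = ext F GP q].
pose qq := fun r : set T -> R =>
  epsilon (inhabits (fun _ : set T => (0 : R))) (fun q => Q q /\ r = ext F GP q).
have hqq : forall r, Rf r -> Q (qq r) /\ r = ext F GP (qq r).
  move=> r [q qQ ->]; apply: (epsilon_spec (inhabits (fun _ : set T => (0 : R)))
    (fun q' => Q q' /\ ext F GP q = ext F GP q')).
  by exists q.
have hqqe : forall q, Q q -> qq (ext F GP q) = q.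
  move=> q qQ; have [h1 h2] := hqq (ext F GP q) (ex_intro2 _ _ q qQ erefl).
  by apply/esym/(ext_inj hF (hQp _ qQ) (hQp _ h1) hFG).
have hsc : forall p, P p -> exists qs : nat -> set T -> R, (forall i, Q (qs i)) /\
    forall N, F N -> (forall i, qs i N = 0) -> p N = 0.
  move=> p pP; have [b [_ [c [qs [_ hqs _ hlim]]]] hpb] := hPQ p pP.
  exists qs; split => // N hN hq; apply: hpb => //.
  apply: (sum_null (u := fun i => c i * qs i N)); last exact: hlim.
  by move=> i; rewrite hq mulr0.
have nullPQ : forall N, F N -> (forall p, P p -> p N = 0) <-> (forall q, Q q -> q N = 0).
  move=> N hN; split.
    by move=> h q qQ; have [p pP hqp] := hQP q qQ; apply: hqp => //; apply: h.
  move=> h p pP; have [qs [hqs hn]] := hsc p pP.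
  by apply: hn => // i; apply: h.
have restrE : forall q N, Q q -> F N -> restr F (ext F GP q) N = q N.
  by move=> q N qQ hN; rewrite /restr asboolT // (ext_F hF (hQp _ qQ) (hFG _ hN) hN).
have compE : forall q A, Q q -> completion F (ext F GP q) A <-> completion F q A.
  move=> q A qQ; split => -[B [N [Z [hB hN hN0 hZ hA]]]]; exists B, N, Z; split => //.
    by rewrite -(ext_F hF (hQp _ qQ) (hFG _ hN) hN).
  by rewrite (ext_F hF (hQp _ qQ) (hFG _ hN) hN).
have hGPe : GP = completion_fam F Rf.
  apply/seteqP; split => A hA.
    by move=> r [q qQ ->]; apply/compE => //; apply: hGc.
  move=> p pP; have [qs [hqs hn]] := hsc p pP.
  have : forall i, exists BN : set T * set T, crep F (qs i) A BN.1 BN.2.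
    move=> i; have /completion_crep [B [N h]] : completion F (qs i) A.
      by apply/compE => //; apply: hA; exists (qs i).
    by exists (B, N).
  move=> /choice [f hf]; apply/completion_crep.
  pose B := \bigcup_i (f i).1.
  pose C := \bigcap_i ((f i).1 `|` (f i).2).
  have hB : F B by apply: saUn => // i; case: (hf i).
  have hC : F C by apply: saIn => // i; case: (hf i) => h1 h2 _ _ _; apply: saU.
  exists B, (C `\` B); split => //.
  - exact: saD.
  - apply: hn; first exact: saD.
    move=> i; case: (hf i) => hBi hNi hNi0 _ _.
    apply: (prnull_sub hF (hQp _ (hqs i)) (saD hF hC hB) hNi _ hNi0).
    move=> x [hxC hxB]; have [] := hxC i I.
      by move=> h; exfalso; apply: hxB; exists i.
    by [].
  - by move=> x [i _ hx]; case: (hf i) => _ _ _ /(_ x hx).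
  move=> x hx; have [hxB|hxB] := pselect (B x); first by left.
  right; split => // i _; case: (hf i) => _ _ _ _ /(_ x hx).
  by [].
exists Rf, (fun r => S (qq r)); split.
- by move=> r [q qQ ->]; exact: (ext_prob hF (hQp _ qQ) (hGc q qQ) hGU hGT).
- split; last by move=> f; rewrite -hGPe.
  apply/seteqP; split => A [N [hN hAN hn]]; exists N; split => //.
    move=> mu [r [q qQ ->] <-]; rewrite restrE //.
    by move: N hN hAN hn => N hN _ /(nullPQ N hN); apply.
  move=> p pP; apply: (proj2 (nullPQ N hN)) pP => q qQ.
  rewrite -(restrE q N qQ hN); apply: hn.
  by exists (ext F GP q) => //; exists q.
- split.
    move=> r hr; have [h1 h2] := hqq r hr; split; first by apply: hFG; apply: hQS.
    by rewrite {1}h2 (ext_F hF (hQp _ h1) (hFG _ (hQS _ h1)) (hQS _ h1)) hQS1 // asboolT.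
  move=> r r' hr hr' hne; have [h1 h2] := hqq r hr; have [h1' h2'] := hqq r' hr'.
  apply: hdisj => // e; apply: hne; by rewrite h2 h2' e.
move=> A p hA pP hcv.
have hAS : forall q, Q q -> p (A `&` S q) = 0.
  move=> q qQ; have := hcv (ext F GP q) (ex_intro2 _ _ q qQ erefl).
  rewrite /= hqqe //; apply: (cv_null hF (hP _ pP)).
  by apply: saI => //; apply: hQS.
have [qs [hqs hn]] := hsc p pP.
pose U := \bigcup_i S (qs i).
have hU : F U by apply: saUn => // i; apply: hQS.
have hAU : p (A `\` U) = 0.
  apply: hn; first exact: saD.
  move=> i; apply: (prnull_sub hF (hQp _ (hqs i)) (saD hF hA hU) (saC hF (hQS _ (hqs i)))).
    by move=> x [_ hxU] hx; apply: hxU; exists i.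
  rewrite (prC hF (hQp _ (hqs i)) (hQS _ (hqs i))) hQS1 // asboolT //.
  by rewrite subrr.
pose G := fun n : nat => if n is n'.+1 then A `&` S (qs n') else A `\` U.
have hG : forall n, F (G n).
  by move=> [|n] /=; [apply: saD | apply: saI => //; apply: hQS].
apply: (prnull_sub hF (hP _ pP) hA (saUn hF hG)).
  move=> x hx; have [hxU|hxU] := pselect (U x).
    by case: hxU => i _ hxi; exists i.+1.
  by exists 0%N.
by apply: (prnull_bigcup hF (hP _ pP) hG) => -[|n] //=; apply: hAS.
Qed.
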